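(* Fix $q\in[0,1)$. For $n\in\mathbb{N}$ let $\Pi_n$ be $\pi_{n,q}$-distributed and $T_n=\mathrm{BST}(\Pi_n)$. Define $\psi_R:\mathbb{T}\to[0,1]$ by $\psi_R(v)=1$ if $v\in\{1^k:k\ge0\}$ and $\psi_R(v)=0$ otherwise. Then $T_n$ converges to $\psi_R$ with respect to subtree sizes: for every $r\ge1$ and all $v_1,\dots,v_r\in\mathbb{T}$, $$\big(\tau_{T_n}(v_i)\big)_{1\le i\le r}\longrightarrow\big(\psi_R(v_i)\big)_{1\le i\le r}\quad\text{in distribution}.$$
   Context: $\pi_{n,q}(\sigma)=q^{\mathrm{Inv}(\sigma)}/Z_{n,q}$ on $S_n$, $\mathrm{Inv}(\sigma)=|\{i<j:\sigma(i)>\sigma(j)\}|$, $0^0=1$. $\mathbb{T}$ is the set of finite words over $\{0,1\}$ with empty word $\varnothing$; $1^k$ is the word of $k$ ones ($1^0=\varnothing$); $v\mathbb{T}=\{vw:w\in\mathbb{T}\}$. For a finite sequence $x=(x_1,\dots,x_n)$ of distinct numbers, $\mathrm{BST}(x)=\emptyset$ if $n=0$, else $\{\varnothing\}\cup0\,\mathrm{BST}(x_-)\cup1\,\mathrm{BST}(x_+)$ with $x_-$ (resp. $x_+$) the subsequence of entries smaller (resp. larger) than $x_1$ in original order, and $aS=\{aw:w\in S\}$; $\mathrm{BST}(\sigma)=\mathrm{BST}(\sigma(1),\dots,\sigma(n))$. For a finite nonempty binary tree $T\subseteq\mathbb{T}$, $\tau_T(v)=|T\cap v\mathbb{T}|/|T|$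 for $v\in\mathbb{T}$. *)

(* Defs.v *)
From HB Require Import structures.
From mathcomp Require Import all_boot all_order all_algebra all_fingroup.
From mathcomp Require Import all_classical all_reals all_analysis.
Set Implicit Arguments. Unset Strict Implicit. Unset Printing Implicit Defensive.
Import Order.TTheory GRing.Theory Num.Theory.

(* Words over {0,1}: seq bool, with false = 0 and true = 1. *)

(* BST of a sequence of distinct naturals, as a list of words (nodes);
   fuel-based, fuel = size x suffices. *)
Fixpoint bst_fuel (fuel : nat) (x : seq nat) : seq (seq bool) :=
  match fuel, x with
  | 0, _ => [::]
  | _, [::] => [::]
  | fuel'.+1, a :: t =>
      [::] :: map (cons false) (bst_fuel fuel' [seq y <- t | (y < a)%N])
           ++ map (cons true) (bst_fuel fuel' [seq y <- t | (a < y)%N])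
  end.

Definition bst (x : seq nat) : seq (seq bool) := bst_fuel (size x) x.

(* BST(sigma) for sigma in S_n, using (sigma(0),...,sigma(n-1)) (0-based values,
   same relative order). *)
Definition bst_perm (n : nat) (s : 'S_n) : seq (seq bool) :=
  bst [seq nat_of_ord (s i) | i <- enum 'I_n].

Definition inv_count (n : nat) (s : 'S_n) : nat :=
  #|[set p : 'I_n * 'I_n | (p.1 < p.2)%N && (s p.2 < s p.1)%N]|.

Local Open Scope ring_scope.

(* Mallows distribution pi_{n,q} (note 0 ^+ 0 = 1). *)
Definition mallows (R : realType) (q : R) (n : nat) (s : 'S_n) : R :=
  q ^+ inv_count s / \sum_(t : 'S_n) q ^+ inv_count t.

Definition tau (R : realType) (T : seq (seq bool)) (v : seq bool) : R :=
  (count (fun w => prefix v w) (undup T))%:R / (size (undup T))%:R.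

Definition psiR (R : realType) (v : seq bool) : R :=
  if all (fun b => b == true) v then 1 else 0.

Definition exp_tau (R : realType) (q : R) (r : nat) (v : 'I_r -> seq bool)
  (f : 'rV[R]_r -> R) (n : nat) : R :=
  \sum_(s : 'S_n) mallows q s * f (\row_i tau R (bst_perm s) (v i)).

(* Main.v *)
Require Import Defs.
From HB Require Import structures.
From mathcomp Require Import all_boot all_order all_algebra all_fingroup.
From mathcomp Require Import all_classical all_reals all_analysis.
From mathcomp Require Import zify ring lra.
Import Order.TTheory GRing.Theory Num.Theory.
Import numFieldNormedType.Exports.
Set Implicit Arguments. Unset Strict Implicit. Unset Printing Implicit Defensive.

Lemma bst_fuel_uniq f x : uniq (bst_fuel f x).
Proof.
elim: f x => [|f IH] [|a t] //=.
rewrite cat_uniq !map_inj_uniq ?IH //; try by move=> ? ? [].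
rewrite mem_cat !andbT; apply/andP; split.
  by rewrite negb_or; apply/andP; split; apply/mapP => -[].
by apply/hasPn => w /mapP [u _ ->]; apply/mapP => -[].
Qed.

Lemma bst_fuel_size_le f x : size (bst_fuel f x) <= size x.
Proof.
elim: f x => [|f IH] [|a t] //=.
rewrite size_cat !size_map ltnS.
apply: leq_trans (leq_add (IH _) (IH _)) _.
rewrite !size_filter -(count_predC (fun y => y < a) t) leq_add2l.
by apply: sub_count => y /=; rewrite -leqNgt => H; apply: ltnW.
Qed.

Lemma bst_fuel_size f x : uniq x -> size x <= f -> size (bst_fuel f x) = size x.
Proof.
elim: f x => [|f IH] [|a t] //= /andP [nat_ ut] hs.
have h1 : size [seq y <- t | y < a] <= f.
  by rewrite size_filter (leq_trans (count_size _ _)) // -ltnS.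
have h2 : size [seq y <- t | a < y] <= f.
  by rewrite size_filter (leq_trans (count_size _ _)) // -ltnS.
rewrite size_cat !size_map !IH ?filter_uniq //.
congr _.+1; rewrite !size_filter -(count_predC (fun y => y < a) t).
congr (_ + _); apply: eq_in_count => y yt /=.
have ay : a != y by apply: contraNneq nat_ => ->.
by rewrite ltn_neqAle ay -leqNgt.
Qed.

Fixpoint good (L d : nat) (x : seq nat) : bool :=
  match L, x with
  | 0, _ => true
  | _, [::] => true
  | L'.+1, a :: t => (count (fun y => y <= a) t <= d) && good L' d t
  end.

Lemma good_mono L L' d t : L' <= L -> good L d t -> good L' d t.
Proof.
elim: t L L' => [|a t IH] [|L] [|L'] //= hL /andP [h1 h2].
by rewrite h1 (IH L).
Qed.

Lemma good_filter (p : pred nat) L d t :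
  good L d t -> good (L - count (predC p) t) d [seq y <- t | p y].
Proof.
elim: t L => [|a t IH] [|L] //=.
move=> /andP [h1 h2]; case: (boolP (p a)) => pa /=.
  rewrite add0n; case: (ltnP L (count (predC p) t)) => hLc.
    by have -> : L.+1 - count (predC p) t = 0 by apply/eqP; rewrite subn_eq0.
  rewrite subSn //=; apply/andP; split; last exact: IH.
  apply: leq_trans h1; rewrite count_filter.
  by apply: sub_count => y /andP [].
by rewrite add1n subSS; apply: IH.
Qed.

Definition Dk (T : seq (seq bool)) k := size T - count (prefix (nseq k true)) T.

Lemma Dk_step f a t k :
  Dk (bst_fuel f.+1 (a :: t)) k.+1 =
  (size (bst_fuel f [seq y <- t | y < a])).+1 + Dk (bst_fuel f [seq y <- t | a < y]) k.
Proof.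
rewrite /Dk /= size_cat !size_map count_cat !count_map.
have -> : count (preim (cons false) (prefix (true :: nseq k true)))
             (bst_fuel f [seq y <- t | y < a]) = 0.
  by apply/eqP; rewrite -leqn0 leqNgt -has_count; apply/hasPn => w.
have -> : count (preim (cons true) (prefix (true :: nseq k true)))
             (bst_fuel f [seq y <- t | a < y]) =
          count (prefix (nseq k true)) (bst_fuel f [seq y <- t | a < y]).
  by apply: eq_count => w.
by rewrite !add0n -addSn addnBA ?count_size.
Qed.

Lemma D_bst k d L f x : size x <= f -> good L d x -> k * d.+1 <= L ->
  Dk (bst_fuel f x) k <= k * d.+1.
Proof.
elim: k d L f x => [|k IH] d L f x.
  move=> _ _ _; rewrite /Dk mul0n (@eq_count _ _ predT) ?count_predT ?subnn //.
  by case.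
case: f => [|f]; first by move=> *; rewrite /Dk.
case: x => [|a t]; first by move=> *; rewrite /Dk.
case: L => [|L]; first by rewrite mulSn.
move=> /= hs /andP [hc hg] hL.
rewrite Dk_step mulSn; apply: leq_add.
  rewrite ltnS; apply: leq_trans (bst_fuel_size_le _ _) _.
  by rewrite size_filter; apply: leq_trans hc; apply: sub_count => y /ltnW.
have hc' : count (predC (fun y => a < y)) t <= d.
  by apply: leq_trans hc; apply: sub_count => y /=; rewrite -leqNgt.
apply: (IH d (L - count (predC (fun y => a < y)) t)).
- by rewrite size_filter (leq_trans (count_size _ _)) // -ltnS.
- exact: good_filter.
- move: hL hc'; rewrite mulSn; set m := k * d.+1; lia.
Qed.

Lemma Dk_mono T k K : k <= K -> Dk T k <= Dk T K.
Proof.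
move=> hk; rewrite /Dk leq_sub2l //; apply: sub_count => w /= h.
have pk : prefix (nseq k true) (nseq K true) by rewrite prefixE size_nseq take_nseq.
exact: (prefix_trans pk h).
Qed.

Lemma count_disj T v : ~~ all (fun b => b == true) v ->
  count (prefix v) T <= Dk T (size v).
Proof.
move=> hall; rewrite /Dk leq_subRL ?count_size // addnC -count_predUI.
have -> : count (predI (prefix v) (prefix (nseq (size v) true))) T = 0.
  apply/eqP; rewrite -leqn0 leqNgt -has_count; apply/hasPn => w _ /=.
  rewrite !prefixE size_nseq; apply: contraNN hall => /andP [/eqP h2 /eqP h1].
  by apply/all_pred1P; rewrite -{1}h2 h1.
by rewrite addn0 count_size.
Qed.


Lemma count_enumT (T : finType) (p : pred T) : count p (enum T) = #|p|.
Proof. by rewrite cardE -size_filter /enum_mem; congr size; rewrite filter_predT. Qed.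

Lemma sum_b2n_card (T : finType) (p : pred T) : \sum_(j : T) (p j : nat) = #|p|.
Proof.
rewrite -sum1_card [RHS]big_mkcond; apply: eq_bigr => j _.
by rewrite -topredE /=; case: (p j).
Qed.

Lemma sum_ord_lt n a : \sum_(j < n) ((j < a) : nat) = minn a n.
Proof.
elim: n => [|n IH]; first by rewrite big_ord0 minn0.
rewrite big_ord_recr /= IH; case: (ltnP n a) => h /=; lia.
Qed.

Lemma sum_perm_lt n (t : 'S_n) a : a <= n -> \sum_(j < n) ((t j < a) : nat) = a.
Proof.
move=> han; transitivity (\sum_(j < n) ((j < a) : nat)).
  by rewrite [RHS](reindex_inj (@perm_inj _ t)).
by rewrite sum_ord_lt; apply/minn_idPl.
Qed.

Definition pseq n (s : 'S_n) : seq nat := [seq nat_of_ord (s i) | i <- enum 'I_n].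

Lemma pseq_uniq n (s : 'S_n) : uniq (pseq s).
Proof. by rewrite map_inj_uniq ?enum_uniq // => i j /val_inj /perm_inj. Qed.

Lemma size_pseq n (s : 'S_n) : size (pseq s) = n.
Proof. by rewrite size_map size_enum_ord. Qed.

Lemma count_pseq n (t : 'S_n) (p : pred nat) :
  count p (pseq t) = \sum_(j < n) (p (t j) : nat).
Proof. by rewrite count_map count_enumT sum_b2n_card. Qed.

Lemma pseq_lift n (a : 'I_n.+1) (t : 'S_n) :
  pseq (lift_perm ord0 a t) = (a : nat) :: map (bump a) (pseq t).
Proof.
rewrite /pseq enum_ordSl /= lift_perm_id -map_comp; congr (_ :: _).
rewrite -map_comp; apply: eq_map => i /=; by rewrite lift_perm_lift.
Qed.

Lemma inv_countE n (s : 'S_n) :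
  inv_count s = \sum_(i < n) \sum_(j < n) (((i < j) && (s j < s i)) : nat).
Proof.
rewrite /inv_count -sum1_card big_mkcond pair_big.
by apply: eq_bigr => -[i j] _; rewrite inE; case: (_ && _).
Qed.

Lemma lift_val m (a : 'I_m.+1) (x : 'I_m) : (lift a x : nat) = bump a x.
Proof. by []. Qed.

Lemma bump_lt a x : (bump a x < a) = (x < a).
Proof. rewrite /bump; case: (leqP a x) => h; lia. Qed.

Lemma bump_ltlt a x y : (bump a x < bump a y) = (x < y).
Proof. by rewrite !ltnNge leq_bump2. Qed.

Lemma inv_count_lift n (a : 'I_n.+1) (t : 'S_n) :
  inv_count (lift_perm ord0 a t) = a + inv_count t.
Proof.
rewrite !inv_countE big_ord_recl big_ord_recl lift_perm_id.
have -> : \sum_(i < n) (ord0 < lift ord0 i) && (lift_perm ord0 a t (lift ord0 i) < a) = a.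
  transitivity (\sum_(j < n) ((t j < a) : nat)); last first.
    by apply: sum_perm_lt; rewrite -ltnS ltn_ord.
  by apply: eq_bigr => j _; rewrite lift_perm_lift lift_val bump_lt.
have -> : \sum_(i < n) \sum_(j < n.+1)
        (lift ord0 i < j) &&
        (lift_perm ord0 a t j < lift_perm ord0 a t (lift ord0 i)) =
     \sum_(i < n) \sum_(j < n) (i < j) && (t j < t i).
  apply: eq_bigr => i _; rewrite big_ord_recl.
  by apply: eq_bigr => j _; rewrite !lift_perm_lift !lift_val !bump_ltlt.
by [].
Qed.

Local Open Scope classical_set_scope.
Local Open Scope ring_scope.


Lemma tau_bound (R : realType) T v : uniq T -> (0 < size T)%N ->
  `|tau R T v - psiR R v| <= (Dk T (size v))%:R / (size T)%:R.
Proof.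
move=> uT nT; rewrite /tau undup_id //.
have nz : (size T)%:R != 0 :> R by rewrite pnatr_eq0 -lt0n.
have n0 : 0 < (size T)%:R :> R by rewrite ltr0n.
rewrite /psiR; case: ifP => hall.
  have /all_pred1P hv := hall.
  rewrite /Dk -hv natrB ?count_size // mulrBl divff // distrC ger0_norm //.
  by rewrite subr_ge0 ler_pdivrMr // mul1r ler_nat count_size.
rewrite subr0 ger0_norm ?divr_ge0 // ler_wpM2r ?invr_ge0 ?ler0n // ler_nat.
by apply: count_disj; rewrite hall.
Qed.

Lemma sum_S (V : nmodType) n (F : 'S_n.+1 -> V) :
  \sum_(s : 'S_n.+1) F s = \sum_(a : 'I_n.+1) \sum_(t : 'S_n) F (lift_perm ord0 a t).
Proof.
rewrite (partition_big (fun s : 'S_n.+1 => s ord0) predT) //=.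
apply: eq_bigr => a _.
rewrite (reindex (lift_perm ord0 a)) /=; last first.
  pose ulsf i (s : 'S_n.+1) k := odflt k (unlift (s i) (s (lift i k))).
  have ulsfK i (s : 'S__) k: lift (s i) (ulsf i s k) = s (lift i k).
    rewrite /ulsf; have:= neq_lift i k.
    by rewrite -(can_eq (permK s)) => /unlift_some[] ? ? ->.
  have inj_ulsf: injective (ulsf ord0 _).
    move=> s; apply: can_inj (ulsf (s ord0) s^-1%g) _ => k'.
    by rewrite {1}/ulsf ulsfK !permK liftK.
  exists (fun s => perm (inj_ulsf s)) => [s _ | s].
    by apply/permP=> k'; rewrite permE /ulsf lift_perm_lift lift_perm_id liftK.
  move/(s _ =P _) => si0; apply/permP=> k.
  case: (unliftP ord0 k) => [k'|] ->; rewrite ?lift_perm_id //.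
  by rewrite lift_perm_lift -si0 permE ulsfK.
by apply: eq_bigl => t; rewrite lift_perm_id eqxx.
Qed.

Lemma tail_le (R : realDomainType) (q : R) (hq : 0 <= q) N d :
  \sum_(a < N) (d < a)%:R * q ^+ a <= q ^+ d.+1 * \sum_(a < N) q ^+ a.
Proof.
elim: N d => [|N IH] d; first by rewrite !big_ord0 mulr0.
have mono : \sum_(i < N) q ^+ i <= \sum_(i < N.+1) q ^+ i.
  by rewrite [X in _ <= X]big_ord_recr /= lerDl exprn_ge0.
rewrite [X in X <= _]big_ord_recl ltn0 mul0r add0r.
case: d => [|d].
  have -> : \sum_(i < N) (0 < bump 0 i)%:R * q ^+ bump 0 i = q * \sum_(i < N) q ^+ i.
    by rewrite big_distrr; apply: eq_bigr => i _; rewrite /bump add1n ltn0Sn mul1r exprS.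
  by rewrite expr1 ler_wpM2l.
have -> : \sum_(i < N) (d.+1 < bump 0 i)%:R * q ^+ bump 0 i =
          q * \sum_(i < N) (d < i)%:R * q ^+ i.
  by rewrite big_distrr; apply: eq_bigr => i _; rewrite /bump add1n ltnS exprS mulrCA.
rewrite exprS -mulrA ler_wpM2l //; apply: le_trans (IH d) _.
by rewrite ler_wpM2l ?exprn_ge0.
Qed.

Lemma good_bump L d a s : good L d (map (bump a) s) = good L d s.
Proof.
elim: s L => [|x s IH] [|L] //=; rewrite IH count_map.
by rewrite (@eq_count _ _ (fun y => y <= x)%N) // => y /=; rewrite leq_bump2.
Qed.

Lemma bump_le a y : (bump a y <= a)%N = (y < a)%N.
Proof. rewrite /bump; case: (leqP a y) => h; lia. Qed.

Lemma good_lift n L d (a : 'I_n.+1) (t : 'S_n) :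
  good L.+1 d (pseq (lift_perm ord0 a t)) = (a <= d)%N && good L d (pseq t).
Proof.
rewrite pseq_lift /= good_bump count_map.
rewrite (@eq_count _ _ (fun y => y < a)%N) ?count_pseq ?sum_perm_lt //.
  by rewrite -ltnS ltn_ord.
by move=> y /=; rewrite bump_le.
Qed.

Definition Zs (R : realDomainType) (q : R) n := \sum_(s : 'S_n) q ^+ inv_count s.

Lemma Zs_ge0 (R : realDomainType) (q : R) n : 0 <= q -> 0 <= Zs q n.
Proof. by move=> hq; apply: sumr_ge0 => s _; exact: exprn_ge0. Qed.

Lemma Zs_S (R : realDomainType) (q : R) n :
  Zs q n.+1 = (\sum_(a < n.+1) q ^+ a) * Zs q n.
Proof.
rewrite /Zs sum_S big_distrl /=; apply: eq_bigr => a _.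
by rewrite big_distrr /=; apply: eq_bigr => t _; rewrite inv_count_lift exprD.
Qed.

Lemma bad_bound (R : realDomainType) (q : R) (hq : 0 <= q) d n L :
  \sum_(s : 'S_n) (~~ good L d (pseq s))%:R * q ^+ inv_count s
    <= L%:R * q ^+ d.+1 * Zs q n.
Proof.
elim: n L => [|n IH] L.
  rewrite big1 ?mulr_ge0 ?exprn_ge0 ?Zs_ge0 //.
  by move=> s _; rewrite /pseq enum_ord0; case: L => [|L] /=; rewrite mul0r.
case: L => [|L].
  by rewrite big1 ?mul0r // => s _; rewrite /= mul0r.
rewrite sum_S Zs_S.
apply: (@le_trans _ _ (\sum_(a < n.+1) ((d < a)%:R * q ^+ a * Zs q n +
            q ^+ a * \sum_(t : 'S_n) (~~ good L d (pseq t))%:R * q ^+ inv_count t))).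
  apply: ler_sum => a _; rewrite /Zs !big_distrr -big_split.
  apply: ler_sum => t _.
  have key : (~~ good L.+1 d (pseq (lift_perm ord0 a t)))%:R *
       q ^+ inv_count (lift_perm ord0 a t) <= (d < a)%:R * q ^+ a * q ^+ inv_count t +
       q ^+ a * ((~~ good L d (pseq t))%:R * q ^+ inv_count t).
    rewrite good_lift inv_count_lift exprD negb_and -ltnNge.
    have h1 := exprn_ge0 a hq; have h2 := exprn_ge0 (inv_count t) hq.
    case: (d < a)%N; case: (good L d (pseq t));
      rewrite /= ?mul0r ?mul1r ?mulr0 ?add0r ?addr0 ?mulr1 //.
    by rewrite lerDl mulr_ge0.
  exact: key.
set G := \sum_(a < n.+1) q ^+ a.
have hA : \sum_(a < n.+1) (d < a)%:R * q ^+ a * Zs q n <= q ^+ d.+1 * G * Zs q n.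
  by rewrite -big_distrl /= ler_wpM2r ?Zs_ge0 // tail_le.
have hB : \sum_(a < n.+1) q ^+ a *
      \sum_(t : 'S_n) (~~ good L d (pseq t))%:R * q ^+ inv_count t
    <= G * (L%:R * q ^+ d.+1 * Zs q n).
  rewrite /G big_distrl /=; apply: ler_sum => a _.
  by apply: ler_wpM2l; [exact: exprn_ge0 | exact: IH].
rewrite big_split; apply: le_trans (lerD hA hB) _.
rewrite [X in _ <= X](_ : _ = q ^+ d.+1 * G * Zs q n + G * (L%:R * q ^+ d.+1 * Zs q n)) //.
by rewrite -natr1; ring.
Qed.

Lemma cont_ball : forall (R : realType) r (f : 'rV[R]_r -> R) (fcont : continuous f) (c : 'rV[R]_r) (eps : R), 0 < eps ->
  exists2 e : R, 0 < e & forall x : 'rV[R]_r, (forall i, `|c 0 i - x 0 i| < e) -> `|f c - f x| < eps.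
Proof.
move=> R r f fcont c eps eps0.
have := fcont c. move/cvgrPdist_lt => /(_ eps eps0).
move/nbhs_ballP => [e e0 he]. exists e => // x hx. apply: (he x). 
split => // i j; rewrite (ord1 i) -ball_normE /=; exact: hx.
Qed.


Lemma bernoulli_le (R : realDomainType) (h : R) m : 0 <= h -> 1 + m%:R * h <= (1 + h) ^+ m.
Proof.
move=> h0; elim: m => [|m IH]; first by rewrite mul0r addr0 expr0.
rewrite exprS; apply: le_trans (ler_wpM2l _ IH); last by rewrite addr_ge0.
have hm : 0 <= m%:R :> R by rewrite ler0n.
rewrite -natr1; nra.
Qed.

Lemma mq_small (R : realType) (q : R) : 0 <= q -> q < 1 ->
  forall eta, 0 < eta -> exists m, (0 < m)%N /\ m%:R * q ^+ m <= eta.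
Proof.
move=> q0 q1 eta eta0.
pose p := (1 + q) / 2.
have p0 : 0 < p by rewrite /p; lra.
have p1 : p < 1 by rewrite /p; lra.
have qp : q <= p ^+ 2 by rewrite /p expr2; nra.
pose h := p^-1 - 1.
have h0 : 0 < h by rewrite /h subr_gt0 invf_gt1.
have hp : 1 + h = p^-1 by rewrite /h addrC subrK.
have mp : forall m, m%:R * p ^+ m <= h^-1.
  move=> m; rewrite -(ler_pM2l h0) mulfV ?gt_eqF //.
  have := @bernoulli_le R h m (ltW h0); rewrite hp exprVn => hb.
  have pm0 : 0 < p ^+ m by exact: exprn_gt0.
  rewrite -(ler_pM2r pm0) mulVf ?gt_eqF // in hb.
  have m0 : 0 <= m%:R :> R by rewrite ler0n.
  nra.
have cv := @cvg_expr R p.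
have H : \forall m \near \oo, (p ^+ m <= eta * h).
  have := cv; rewrite ger0_norm ?ltW // => /(_ p1) /cvgrPdist_le /(_ (eta * h)).
  move=> /(_ (mulr_gt0 eta0 h0)); apply: filterS => m; rewrite sub0r normrN.
  by rewrite ger0_norm // exprn_ge0 // ltW.
have [m [hm1 hm2]] := filter_ex (filterI H (nbhs_infty_ge 1)).
exists m; split => //.
apply: (@le_trans _ _ (m%:R * (p ^+ m * p ^+ m))).
  rewrite ler_wpM2l ?ler0n // -exprMn -expr2.
  by apply: lerXn2r; rewrite // nnegrE exprn_ge0 // ltW.
apply: (@le_trans _ _ (h^-1 * (eta * h))).
  have hh : m%:R * (p ^+ m * p ^+ m) = (m%:R * p ^+ m) * p ^+ m by ring.
  rewrite hh; apply: ler_pM => //.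
  - by rewrite mulr_ge0 ?ler0n ?exprn_ge0 // ltW.
  - by rewrite exprn_ge0 // ltW.
have hh : h^-1 * (eta * h) = eta * (h^-1 * h) by ring.
by rewrite hh mulVf ?gt_eqF // mulr1.
Qed.

Lemma inv_count1 n : inv_count (1 : 'S_n) = 0%N.
Proof.
rewrite inv_countE big1 // => i _; rewrite big1 // => j _.
by rewrite !perm1; case: (ltngtP i j).
Qed.

Lemma Zs_gt0 (R : realDomainType) (q : R) n : 0 <= q -> 0 < Zs q n.
Proof.
move=> hq; rewrite /Zs (bigD1 1%g) //= inv_count1 expr0.
by rewrite ltr_pwDl // sumr_ge0 // => s _; exact: exprn_ge0.
Qed.

Lemma mallows_ge0 (R : realType) (q : R) n (s : 'S_n) : 0 <= q -> 0 <= mallows q s.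
Proof.
move=> hq; rewrite /mallows divr_ge0 ?exprn_ge0 //.
by apply: sumr_ge0 => t _; exact: exprn_ge0.
Qed.

Lemma mallows_sum (R : realType) (q : R) n : 0 <= q -> \sum_(s : 'S_n) mallows q s = 1.
Proof.
move=> hq; rewrite /mallows -big_distrl /= mulfV //.
by have := Zs_gt0 n hq; rewrite /Zs => /gt_eqF ->.
Qed.

Lemma prob_bad (R : realType) (q : R) (hq : 0 <= q) n L d :
  \sum_(s : 'S_n) mallows q s * (~~ good L d (pseq s))%:R <= L%:R * q ^+ d.+1.
Proof.
have Z0 := Zs_gt0 n hq.
have -> : \sum_(s : 'S_n) mallows q s * (~~ good L d (pseq s))%:R =
   (\sum_(s : 'S_n) (~~ good L d (pseq s))%:R * q ^+ inv_count s) / Zs q n.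
  rewrite big_distrl /=; apply: eq_bigr => s _; rewrite /mallows /Zs; ring.
by rewrite ler_pdivrMr // bad_bound.
Qed.

Lemma tau_perm (R : realType) n (s : 'S_n) K d (v : seq bool) :
  (0 < n)%N -> good (K * d.+1) d (pseq s) -> (size v <= K)%N ->
  `|tau R (bst_perm s) v - psiR R v| <= (K * d.+1)%:R / n%:R.
Proof.
move=> n0 hg hv.
have hs : size (bst_perm s) = n.
  by rewrite /bst_perm /bst -/(pseq s) bst_fuel_size ?pseq_uniq ?size_pseq.
apply: le_trans (tau_bound R v (bst_fuel_uniq _ _) _) _; first by rewrite hs.
rewrite hs ler_wpM2r ?invr_ge0 ?ler0n // ler_nat.
apply: leq_trans (Dk_mono _ hv) _.
by apply: (D_bst (L := K * d.+1)); rewrite // -/(pseq s).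
Qed.

Unset Implicit Arguments.
Theorem theorem1p5 (R : realType) (q : R) (hq0 : 0 <= q) (hq1 : q < 1)
  (r : nat) (hr : (1 <= r)%N) (v : 'I_r -> seq bool)
  (f : 'rV[R]_r -> R) (fcont : continuous f)
  (fbd : exists M : R, forall x, `|f x| <= M) :
  (fun n : nat => exp_tau q v f n) @ \oo --> f (\row_i psiR R (v i)).
Proof.
set c := \row_i psiR R (v i).
apply/cvgrPdist_le => eps eps0.
have [M hM] := fbd.
have M0 : 0 <= M by apply: le_trans (hM 0); exact: normr_ge0.
have eps20 : 0 < eps / 2 by rewrite divr_gt0.
have [e e0 he] := @cont_ball R r f fcont c _ eps20.
set K := (\max_(i < r) size (v i))%N.
have hK : forall i, (size (v i) <= K)%N by move=> i; exact: (leq_bigmax i).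
have K0 : 0 <= K%:R :> R by rewrite ler0n.
pose eta := eps / 2 / ((K%:R + 1) * (2 * M + 1)).
have eta0 : 0 < eta by rewrite /eta divr_gt0 // mulr_gt0 //; lra.
have [m [m0 hm]] := @mq_small R q hq0 hq1 _ eta0.
have hmd : m = m.-1.+1 by rewrite prednK.
set d := m.-1.
set L := (K * d.+1)%N.
have hbad : forall n, 2 * M * \sum_(s : 'S_n) mallows q s * (~~ good L d (pseq s))%:R <= eps / 2.
  move=> n; apply: le_trans (ler_wpM2l _ (prob_bad hq0 n L d)) _; first lra.
  rewrite /L natrM -hmd -mulrA.
  have hm0 : 0 <= m%:R * q ^+ m by rewrite mulr_ge0 ?ler0n ?exprn_ge0.
  apply: (@le_trans _ _ (2 * M * (K%:R * eta))).
    by apply: ler_wpM2l; [lra | apply: ler_wpM2l].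
  rewrite /eta.
  have h1 : 0 < (K%:R + 1) * (2 * M + 1) by apply: mulr_gt0; lra.
  set X := (K%:R + 1) * (2 * M + 1).
  set t := eps / 2 / X.
  have t0 : 0 <= t by rewrite /t divr_ge0 // ltW.
  have ht : eps / 2 = t * X by rewrite /t divfK // gt_eqF.
  rewrite [X in _ <= X]ht /X.
  have hKM : 0 <= K%:R * M by rewrite mulr_ge0.
  nra.
near=> n.
have n0 : (0 < n)%N by near: n; exact: nbhs_infty_ge.
have hn : L%:R / n%:R < e.
  have : L%:R / e + 1 <= n%:R :> R by near: n; exact: nbhs_infty_ger.
  move=> hle; rewrite ltr_pdivrMr ?ltr0n // mulrC -ltr_pdivrMr //.
  by apply: lt_le_trans hle; rewrite ltrDl.
have hsum := @mallows_sum R q n hq0.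
have -> : f c = \sum_(s : 'S_n) mallows q s * f c by rewrite -big_distrl /= hsum mul1r.
rewrite /exp_tau -sumrB.
apply: le_trans (ler_norm_sum _ _ _) _.
apply: (@le_trans _ _ (\sum_(s : 'S_n) mallows q s *
   (eps / 2 + 2 * M * (~~ good L d (pseq s))%:R))).
  apply: ler_sum => s _; rewrite -mulrBr normrM ger0_norm ?mallows_ge0 //.
  apply: ler_wpM2l; first exact: mallows_ge0.
  case: (boolP (good L d (pseq s))) => hg /=.
    rewrite mulr0 addr0; apply: ltW; apply: he => i; rewrite !mxE distrC.
    by apply: le_lt_trans (@tau_perm R n s K d (v i) n0 hg (hK i)) hn.
  rewrite mulr1.
  have h1 := hM c; have h2 := hM (\row_i tau R (bst_perm s) (v i)).
  have h3 := ler_normB (f c) (f (\row_i tau R (bst_perm s) (v i))).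
  lra.
rewrite (eq_bigr (fun s : 'S_n => mallows q s * (eps / 2) +
   2 * M * (mallows q s * (~~ good L d (pseq s))%:R))); last by move=> s _; ring.
rewrite big_split /= -big_distrl /= hsum mul1r -big_distrr /=.
have := hbad n; lra.
Unshelve. all: by end_near.
Qed.
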